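(* For all integers $t,l,n\ge1$, $\beth(t,l^2,n)\ge \beth(2t,l,n)$.
   Context: Fix a totally ordered alphabet with the given number of letters. A word is primitive if it is not of the form $v^k$ with $k>1$. A system of type $X(t,l)$ is a finite sequence $(w_1,\dots,w_N)$ of primitive words of length $t$ over an $l$-letter totally ordered alphabet, no two of which are cyclic shifts of each other. For $1\le i\le N$, $1\le j\le t$, let $w(i,j)$ be the cyclic shift of $w_i$ beginning with its $j$-th letter. Define a strict partial order on the pairs $(i,j)$ by $(i_1,j_1)\prec(i_2,j_2)$ iff $i_1<i_2$ and $w(i_1,j_1)$ is lexicographically smaller than $w(i_2,j_2)$. The system is $n$-light if there are no $n$ pairwise $\prec$-incomparable pairs. $\beth(t,l,n)$ denotes the largest $N$ of an $n$-light system of type $X(t,l)$. *)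

(* Defs.v *)
From mathcomp Require Import all_boot.
From Stdlib Require Import ClassicalEpsilon.
Set Implicit Arguments. Unset Strict Implicit. Unset Printing Implicit Defensive.

Definition word (l : nat) := seq 'I_l.

Definition primitive (l : nat) (w : word l) : Prop :=
  ~ exists (v : word l) (k : nat), 1 < k /\ w = flatten (nseq k v).

Fixpoint lexlt (u v : seq nat) : bool :=
  match u, v with
  | [::], [::] => false
  | [::], _ :: _ => true
  | _ :: _, [::] => false
  | a :: u', b :: v' => (a < b) || ((a == b) && lexlt u' v')
  end.

Definition word_lt (l : nat) (u v : word l) : bool :=
  lexlt (map (@nat_of_ord l) u) (map (@nat_of_ord l) v).

(* the cyclic shift of w beginning with its (j+1)-th letter (0-indexed j) *)
Definition shift (l : nat) (w : word l) (j : nat) : word l := rot j w.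

Definition cyclic_shift_of (l : nat) (u w : word l) : Prop :=
  exists j, j < size w /\ u = shift w j.

(* system of type X(t,l): list (w_1,...,w_N) (0-indexed) *)
Definition is_system (t l : nat) (ws : seq (word l)) : Prop :=
  (forall i, i < size ws -> size (nth [::] ws i) = t) /\
  (forall i, i < size ws -> primitive (nth [::] ws i)) /\
  (forall i k, i < size ws -> k < size ws -> i <> k ->
     ~ cyclic_shift_of (nth [::] ws i) (nth [::] ws k)).

(* pairs (i,j) with i < N, j < t, both 0-indexed *)
Definition prec (l : nat) (ws : seq (word l)) (p q : nat * nat) : bool :=
  (p.1 < q.1) && word_lt (shift (nth [::] ws p.1) p.2) (shift (nth [::] ws q.1) q.2).

Definition n_light (t l n : nat) (ws : seq (word l)) : Prop :=
  ~ exists S : seq (nat * nat),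
      [/\ size S = n, uniq S,
          (forall p, p \in S -> p.1 < size ws /\ p.2 < t) &
          (forall p q, p \in S -> q \in S -> p <> q -> ~~ prec ws p q)].

Definition has_light_system (t l n N : nat) : Prop :=
  exists ws : seq (word l), size ws = N /\ is_system t ws /\ n_light t n ws.

Definition decP (P : Prop) : bool :=
  if excluded_middle_informative P then true else false.

(* beth(t,l,n): the largest N of an n-light system of type X(t,l).
   Any system has pairwise distinct words of length t, so N <= l^t;
   the maximum over N <= l^t is therefore the true maximum. *)
Definition beth (t l n : nat) : nat :=
  \max_(N < (l ^ t).+1 | decP (has_light_system t l n N)) N.

(* Main.v *)
Require Import Defs.
From mathcomp Require Import all_boot.
From mathcomp Require Import zify.
From Stdlib Require Import ClassicalEpsilon.

Section Pair.
Context {l : nat}.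

Lemma enc_lt (a b : 'I_l) : a * l + b < l ^ 2.
Proof. have := ltn_ord a; have := ltn_ord b; rewrite expnS expn1; nia. Qed.

Definition enc (a b : 'I_l) : 'I_(l ^ 2) := Ordinal (enc_lt a b).

Lemma l_pos (x : 'I_(l ^ 2)) : 0 < l.
Proof. move: (ltn_ord x); move: (nat_of_ord x) => y; rewrite expnS expn1; nia. Qed.

Lemma dec1_lt (x : 'I_(l ^ 2)) : x %/ l < l.
Proof. move: (ltn_ord x); move: (nat_of_ord x) => y; rewrite expnS expn1 => h. by rewrite ltn_divLR ?(l_pos x). Qed.

Lemma dec2_lt (x : 'I_(l ^ 2)) : x %% l < l.
Proof. by rewrite ltn_mod (l_pos x). Qed.

Definition dec (x : 'I_(l ^ 2)) : seq 'I_l :=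
  [:: Ordinal (dec1_lt x); Ordinal (dec2_lt x)].

Lemma dec_enc a b : dec (enc a b) = [:: a; b].
Proof.
have lp : 0 < l by have := ltn_ord a; lia.
congr (_ :: _ :: _); apply: val_inj => /=.
  by rewrite divnMDl // divn_small ?addn0.
by rewrite modnMDl modn_small.
Qed.

Fixpoint pairup (s : seq 'I_l) : seq 'I_(l ^ 2) :=
  match s with
  | a :: b :: s' => enc a b :: pairup s'
  | _ => [::]
  end.

Definition unpair (v : seq 'I_(l ^ 2)) : seq 'I_l := flatten (map dec v).

Lemma unpair_cat x y : unpair (x ++ y) = unpair x ++ unpair y.
Proof. by rewrite /unpair map_cat flatten_cat. Qed.

Lemma unpair_nseq k v : unpair (flatten (nseq k v)) = flatten (nseq k (unpair v)).
Proof. elim: k => [|k IH] //=. by rewrite unpair_cat IH. Qed.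

Lemma pairup_size t w : size w = 2 * t -> size (pairup w) = t.
Proof.
elim: t w => [|t IH] [|a [|b w]] //= h; try lia.
by rewrite IH //; lia.
Qed.

Lemma unpair_pairup t w : size w = 2 * t -> unpair (pairup w) = w.
Proof.
elim: t w => [|t IH] [|a [|b w]] h //; try (simpl in h; lia).
have e : unpair (pairup [:: a, b & w]) = dec (enc a b) ++ unpair (pairup w) by [].
rewrite e dec_enc IH //=; simpl in h; lia.
Qed.

Lemma pairup_cat m x y : size x = 2 * m -> pairup (x ++ y) = pairup x ++ pairup y.
Proof.
elim: m x => [|m IH] [|a [|b x]] //= h; try lia.
by rewrite IH //; lia.
Qed.

Lemma rot_pairup t j w : size w = 2 * t -> j <= t ->
  rot j (pairup w) = pairup (rot (2 * j) w).
Proof.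
move=> hs hj.
have htk : size (take (2 * j) w) = 2 * j by rewrite size_take; case: ifP; lia.
have hdr : size (drop (2 * j) w) = 2 * (t - j) by rewrite size_drop; lia.
rewrite -{1}(cat_take_drop (2 * j) w) (@pairup_cat _ _ (drop (2 * j) w) htk) /rot.
rewrite (@pairup_cat _ _ (take (2 * j) w) hdr).
have e1 : size (pairup (take (2 * j) w)) = j by apply: pairup_size.
by rewrite drop_size_cat // take_size_cat.
Qed.

Lemma arith_lt (a b c d : nat) : b < l -> d < l ->
  (a * l + b < c * l + d) = (a < c) || ((a == c) && (b < d)).
Proof.
move=> hb hd; case: (ltngtP a c) => h /=.
- apply/idP; nia.
- apply/idP => h2; nia.
- by subst; rewrite ltn_add2l.
Qed.

Lemma arith_eq (a b c d : nat) : b < l -> d < l ->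
  (a * l + b == c * l + d) = (a == c) && (b == d).
Proof.
move=> hb hd; case: (ltngtP a c) => h /=.
- apply/eqP; nia.
- apply/eqP; nia.
- by subst; rewrite eqn_add2l.
Qed.

Lemma word_lt_pairup t u v : size u = 2 * t -> size v = 2 * t ->
  word_lt (pairup u) (pairup v) = word_lt u v.
Proof.
rewrite /word_lt.
elim: t u v => [|t IH] [|a [|b u]] [|c [|d v]] //= hu hv; try lia.
rewrite IH; try lia.
rewrite arith_lt ?arith_eq //.
by case: (a < c); case: (a == c :> nat); case: (b < d); case: (b == d :> nat).
Qed.

Lemma nth_map_pairup (ws : seq (word l)) i :
  nth [::] (map pairup ws) i = pairup (nth [::] ws i).
Proof.
case: (ltnP i (size ws)) => h; first by rewrite (nth_map [::]).
by rewrite !nth_default ?size_map.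
Qed.

End Pair.
Arguments pairup_size {l t w}.
Arguments unpair_pairup {l t w}.
Arguments rot_pairup {l t j w}.
Arguments word_lt_pairup {l t u v}.

Lemma transfer t l n ws : size ws > 0 -> is_system (2 * t) ws -> n_light (2 * t) n ws ->
  is_system t (map (@pairup l) ws) /\ n_light t n (map (@pairup l) ws).
Proof.
move=> _ [hsz [hpr hns]] hl.
split; [split; [|split]|].
- move=> i; rewrite size_map nth_map_pairup => hi; exact: pairup_size (hsz _ hi).
- move=> i; rewrite size_map nth_map_pairup => hi [v [k [hk he]]].
  apply: (hpr _ hi); exists (unpair v), k; split => //.
  by rewrite -(unpair_pairup (hsz _ hi)) he unpair_nseq.
- move=> i k; rewrite size_map !nth_map_pairup => hi hk hik [j [hj he]].
  apply: (hns _ _ hi hk hik); exists (2 * j).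
  rewrite (pairup_size (hsz _ hk)) in hj.
  rewrite (hsz _ hk); split; first lia.
  rewrite /shift (rot_pairup (hsz _ hk)) in he; last lia.
  rewrite -(unpair_pairup (hsz _ hi)) he (unpair_pairup (t := t)) //.
  by rewrite size_rot hsz.
- move=> [S [hs hu hb hp]]; apply: hl.
  exists (map (fun p => (p.1, 2 * p.2)) S); split.
  + by rewrite size_map.
  + rewrite map_inj_uniq // => [[x1 x2]] [y1 y2] /= [-> e]; congr pair; lia.
  + move=> p /mapP [p0 hp0 ->] /=; have [e1 e2] := hb _ hp0; rewrite size_map in e1.
    split; [exact: e1 | by rewrite ltn_pmul2l].
  + move=> p q /mapP [p0 hp0 ->] /mapP [q0 hq0 ->] hne.
    have hne0 : p0 <> q0 by move=> e; apply: hne; rewrite e.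
    have := hp _ _ hp0 hq0 hne0.
    have [b1 b2] := hb _ hp0; have [c1 c2] := hb _ hq0.
    rewrite size_map in b1 c1.
    rewrite /prec /= !nth_map_pairup /shift.
    rewrite (rot_pairup (hsz _ b1)) ?(ltnW b2) // (rot_pairup (hsz _ c1)) ?(ltnW c2) //.
    by rewrite (word_lt_pairup (t := t)) // size_rot ?hsz.
Qed.

Lemma decPE (P : Prop) : Defs.decP P = true <-> P.
Proof. rewrite /Defs.decP; case: ClassicalEpsilon.excluded_middle_informative => h; split => //. Qed.

Theorem mainTheorem18 (t l n : nat) :
  1 <= t -> 1 <= l -> 1 <= n -> beth (2 * t) l n <= beth t (l ^ 2) n.
Proof.
move=> ht hl hn.
apply/bigmax_leqP => N.
move=> /decPE [ws [hN [hs hli]]].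
case: (posnP (size ws)) => h0.
  by rewrite -hN h0.
have [hs' hl'] := @transfer t l n ws h0 hs hli.
have hNb : N < ((l ^ 2) ^ t).+1 by rewrite -expnM; exact: ltn_ord.
have := @leq_bigmax_cond _ (fun N : 'I_((l ^ 2) ^ t).+1 =>
   Defs.decP (has_light_system t (l ^ 2) n N)) (fun N => nat_of_ord N) (Ordinal hNb).
apply; apply/decPE => /=.
by exists (map (@pairup l) ws); rewrite size_map.
Qed.
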